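(* Let $1/n\ll \eta \ll \mu$. Let $K_{2n+1}$ be 2-factorized. Suppose that $V_0\subseteq V(K_{2n+1})$ and $D_0\subseteq C(K_{2n+1})$ are $\mu$-random subsets which are independent of each other. Then, with high probability, for each pair of distinct vertices $u,v\in V(K_{2n+1})$, there are at least $\eta n$ colours $c\in D_0$ such that both $u$ and $v$ have a neighbour in $V_0$ joined to them by an edge of colour $c$.
   Context: A 2-factorization of $K_{2n+1}$ is an edge-colouring in which every vertex is incident to exactly 2 edges of each colour; $C(K_{2n+1})$ is its colour set. A $q$-random subset of a finite set contains each element independently with probability $q$. ''With high probability'': with probability $1-o(1)$ as $n\to\infty$. $a\ll b$ means the statement holds whenever $a\le b^C/C$ for a suitable fixed absolute constant $C$; $1/n\ll\cdots$ entails $n$ large. *)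

(* Defs.v *)
From HB Require Import structures.
From mathcomp Require Import all_boot all_order all_algebra.
From mathcomp Require Import reals.
Set Implicit Arguments. Unset Strict Implicit. Unset Printing Implicit Defensive.
Import Order.TTheory GRing.Theory Num.Theory.
Local Open Scope ring_scope.

Definition vert (n : nat) := 'I_(2 * n + 1).

(* An edge-colouring of K_{2n+1} with colour set C, given as a symmetric
   function on pairs of distinct vertices (the value on the diagonal is
   irrelevant). *)
Definition two_factorization (n : nat) (C : finType)
    (col : vert n -> vert n -> C) : Prop :=
  (forall u v : vert n, u != v -> col u v = col v u) /\
  (forall (u : vert n) (c : C),
      #|[set v : vert n | (v != u) && (col u v == c)]| = 2%N).

(* Probability that a q-random subset of T equals A. *)
Definition qweight (R : realType) (T : finType) (q : R) (A : {set T}) : R :=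
  q ^+ #|A| * (1 - q) ^+ (#|T| - #|A|).

Definition has_col_nbr (n : nat) (C : finType) (col : vert n -> vert n -> C)
    (V0 : {set vert n}) (u : vert n) (c : C) : bool :=
  [exists x in V0, (x != u) && (col u x == c)].

Definition good_event (R : realType) (n : nat) (C : finType)
    (col : vert n -> vert n -> C) (eta : R)
    (V0 : {set vert n}) (D0 : {set C}) : bool :=
  [forall u : vert n, forall v : vert n, (u != v) ==>
     (eta * n%:R <=
      (#|[set c in D0 | has_col_nbr col V0 u c && has_col_nbr col V0 v c]|)%:R)].

Definition prob_good (R : realType) (n : nat) (C : finType)
    (col : vert n -> vert n -> C) (mu eta : R) : R :=
  \sum_(V0 : {set vert n}) \sum_(D0 : {set C})
     qweight mu V0 * qweight mu D0 * (good_event col eta V0 D0)%:R.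

(* Main.v *)
Require Import Defs.
From HB Require Import structures.
From mathcomp Require Import all_boot all_order all_algebra.
From mathcomp Require Import reals.
From mathcomp Require Import ring lra zify.
Import Order.TTheory GRing.Theory Num.Theory.
Local Open Scope ring_scope.
Set Implicit Arguments. Unset Strict Implicit. Unset Printing Implicit Defensive.

Section Prob.
Variables (R : realType) (T : finType) (q : R).

Definition Ex (F : {set T} -> R) : R := \sum_(A : {set T}) qweight q A * F A.

Lemma qweight_toggle (x : T) (A : {set T}) : x \notin A ->
  q * qweight q A = (1 - q) * qweight q (x |: A).
Proof.
move=> xA; rewrite /qweight cardsU1 xA add1n.
have hle : (#|A|.+1 <= #|T|)%N by have := max_card (x |: A); rewrite cardsU1 xA.
have -> : (#|T| - #|A| = (#|T| - #|A|.+1).+1)%N by lia.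
rewrite !exprS; ring.
Qed.

Lemma sum_toggle (G : {set T} -> R) (x : T) :
  \sum_(A : {set T}) G A = \sum_(A : {set T} | x \notin A) (G A + G (x |: A)).
Proof.
rewrite (bigID (fun A : {set T} => x \in A)) /= addrC big_split /=; congr (_ + _).
rewrite (reindex_onto (fun A => x |: A) (fun A => A :\ x)) /=; last first.
  by move=> A xA; rewrite setD1K.
apply: eq_bigl => A; rewrite setU11 /=.
case xA: (x \in A).
  apply/negbTE; rewrite (_ : (x |: A) :\ x = A :\ x); last first.
    by apply/setP=> y; rewrite !inE; case: (y == x).
  apply/eqP => h; move: xA; rewrite -h !inE eqxx //.
by rewrite setU1K ?xA // eqxx.
Qed.

Lemma Ex_cond (F : {set T} -> R) (x : T) :
  Ex F = q * Ex (fun A => F (x |: A)) + (1 - q) * Ex (fun A => F (A :\ x)).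
Proof.
rewrite /Ex (sum_toggle _ x) (sum_toggle (fun A => qweight q A * F (x |: A)) x)
  (sum_toggle (fun A => qweight q A * F (A :\ x)) x).
rewrite !mulr_sumr -big_split /=; apply: eq_bigr => A xA.
rewrite setUA setUid setU1K // (_ : A :\ x = A); last first.
  by apply/setP=> y; rewrite !inE; case: eqP => // ->; rewrite (negbTE xA).
apply/eqP; rewrite -subr_eq0; apply/eqP.
have h := qweight_toggle xA; move: h.
set wA := qweight q A; set ww := qweight q (x |: A); set F1 := F (x |: A); set F0 := F A.
clearbody wA ww F1 F0 => h. transitivity ((F0 - F1) * (q * wA - (1 - q) * ww)); first ring.
by rewrite h subrr mulr0.
Qed.

Lemma Ex1 : Ex (fun _ => 1) = 1.
Proof.
rewrite /Ex; under eq_bigr do rewrite mulr1.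
rewrite [RHS](_ : 1 = ((1 - q) + q) ^+ #|T|); last by rewrite subrK expr1n.
rewrite exprDn.
rewrite (partition_big (fun A : {set T} => (inord #|A| : 'I_#|T|.+1)) predT) //=.
apply: eq_bigr => k _.
rewrite (eq_bigr (fun _ => (1 - q) ^+ (#|T| - k) * q ^+ k)); last first.
  move=> A /eqP <-; rewrite /qweight inordK ?ltnS ?max_card // mulrC //.
rewrite sumr_const; congr (_ *+ _).
rewrite -(card_draws T k); apply: eq_card => A; rewrite unfold_in /= inordK //.
  by rewrite inE.
by rewrite ltnS max_card.
Qed.

Lemma ExZ (k : R) F : Ex (fun A => k * F A) = k * Ex F.
Proof. by rewrite /Ex mulr_sumr; apply: eq_bigr => A _; rewrite mulrCA. Qed.

Lemma Ex_ext F G : (forall A, F A = G A) -> Ex F = Ex G.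
Proof. by move=> h; rewrite /Ex; apply: eq_bigr => A _; rewrite h. Qed.

Definition xinv (x : T) (H : {set T} -> R) :=
  forall A, H (x |: A) = H A /\ H (A :\ x) = H A.

Lemma Ex_if (x : T) H1 H2 : xinv x H1 -> xinv x H2 ->
  Ex (fun A => if x \in A then H1 A else H2 A) = q * Ex H1 + (1 - q) * Ex H2.
Proof.
move=> h1 h2; rewrite (Ex_cond _ x); congr (_ * _ + _ * _); apply: Ex_ext => A.
  by rewrite setU11; case: (h1 A).
by rewrite setD11; case: (h2 A).
Qed.

End Prob.

Section Indep.
Variables (R : realType) (TV TD : finType) (q t : R) (a b : TD -> TV).

Definition G (I : {set TD}) (V : {set TV}) (D : {set TD}) : R :=
  \prod_(c in I) (if (c \in D) && (a c \in V) && (b c \in V) then t else 1).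

Definition good_pairs (I : {set TD}) := forall c, c \in I -> a c != b c /\
  forall c', c' \in I -> c' != c -> [/\ a c != a c', b c != b c' & a c != b c'].

Lemma G_extD (I : {set TD}) (V : {set TV}) (D D' : {set TD}) : (forall c, c \in I -> (c \in D) = (c \in D')) ->
  G I V D = G I V D'.
Proof. by move=> h; apply: eq_bigr => c cI; rewrite h. Qed.

Lemma G_extV (I : {set TD}) (V V' : {set TV}) (D : {set TD}) : (forall c, c \in I -> (a c \in V) = (a c \in V') /\ (b c \in V) = (b c \in V')) ->
  G I V D = G I V' D.
Proof. by move=> h; apply: eq_bigr => c cI; case: (h c cI) => -> ->. Qed.

Lemma inE1 (T : finType) (x y : T) (A : {set T}) : y != x ->
  (y \in x |: A) = (y \in A) /\ (y \in A :\ x) = (y \in A).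
Proof. by move=> h; rewrite !inE (negbTE h). Qed.

Lemma indep k : forall I : {set TD}, #|I| = k -> good_pairs I ->
  Ex q (fun V => Ex q (fun D => G I V D)) = (1 - q ^+ 3 * (1 - t)) ^+ k.
Proof.
elim: k => [|k IH] I cI gI.
  rewrite expr0; move/eqP: cI; rewrite cards_eq0 => /eqP ->.
  rewrite -[RHS](@Ex1 R TV q); apply: Ex_ext => V.
  rewrite -[RHS](@Ex1 R TD q); apply: Ex_ext => D.
  by rewrite /G big_set0.
have : (0 < #|I|)%N by rewrite cI.
rewrite card_gt0 => /set0Pn [c0 c0I].
set I' := I :\ c0.
have cI' : #|I'| = k by move: cI; rewrite (cardsD1 c0) c0I add1n => -[].
have gI' : good_pairs I'.
  move=> c; rewrite inE => /andP [_ cI1]; case: (gI c cI1) => h1 h2; split => // c'.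
  by rewrite inE => /andP [_ c'I]; apply: h2.
have IH' := IH I' cI' gI'.
case: (gI c0 c0I) => ab0 hc0.
have hI' : forall c, c \in I' -> [/\ c != c0, a c != a c0, a c != b c0, b c != a c0 & b c != b c0].
  move=> c; rewrite !inE => /andP [cc0 cI1].
  case: (hc0 c cI1 cc0) => h1 h2 h3; case: (gI c cI1) => _ h; case: (h c0 c0I).
    by rewrite eq_sym.
  move=> h4 h5 h6; split => //; by rewrite eq_sym.
set HV := fun V => Ex q (fun D => G I' V D).
set h := fun V : {set TV} => if (a c0 \in V) && (b c0 \in V) then t else 1.
have step1 : forall V, Ex q (fun D => G I V D) = (q * h V + (1 - q)) * HV V.
  move=> V.
  rewrite (@Ex_ext _ _ q _ (fun D => if c0 \in D then h V * G I' V D else 1 * G I' V D)); last first.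
    move=> D; rewrite /G (big_setD1 c0) //= /h.
    by case: (c0 \in D) => //=; rewrite mul1r.
  rewrite (@Ex_if _ _ q c0 (fun D => h V * G I' V D) (fun D => 1 * G I' V D)); last 2 first.
  - move=> D; split; congr (_ * _); apply: G_extD => c cc;
    case: (hI' c cc) => cc0 *; by case: (inE1 D cc0).
  - move=> D; split; congr (_ * _); apply: G_extD => c cc;
    case: (hI' c cc) => cc0 *; by case: (inE1 D cc0).
  by rewrite !ExZ mul1r mulrA -mulrDl.
have EHV : Ex q HV = (1 - q ^+ 3 * (1 - t)) ^+ k := IH'.
have HVinv : forall x, (forall c, c \in I' -> a c != x /\ b c != x) -> xinv x HV.
  move=> x hx V; rewrite /HV; split; apply: Ex_ext => D; apply: G_extV => c cc;
  case: (hx c cc) => h1 h2; by rewrite !inE (negbTE h1) (negbTE h2).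
have Ia : xinv (a c0) HV.
  by apply: HVinv => c cc; case: (hI' c cc).
have Ib : xinv (b c0) HV.
  by apply: HVinv => c cc; case: (hI' c cc).
rewrite (Ex_ext q step1).
rewrite (@Ex_ext _ _ q _ (fun V => if a c0 \in V then
   (q * (if b c0 \in V then t else 1) + (1 - q)) * HV V else 1 * HV V)); last first.
  move=> V; rewrite /h; case: (a c0 \in V) => //=.
  by rewrite mulr1 [q + _]addrC subrK.
have ba0 : b c0 != a c0 by rewrite eq_sym.
rewrite (@Ex_if _ _ q (a c0) (fun V => (q * (if b c0 \in V then t else 1) + (1 - q)) * HV V)
   (fun V => 1 * HV V)); last 2 first.
- move=> V; case: (inE1 V ba0) => -> ->; case: (Ia V) => -> -> //.
- by move=> V; case: (Ia V) => -> ->.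
rewrite (@Ex_ext _ _ q _ (fun V => if b c0 \in V then
   (q * t + (1 - q)) * HV V else (q * 1 + (1 - q)) * HV V)); last first.
  by move=> V; case: (b c0 \in V).
rewrite (@Ex_if _ _ q (b c0) (fun V => (q * t + (1 - q)) * HV V)
   (fun V => (q * 1 + (1 - q)) * HV V)); last 2 first.
- by move=> V; case: (Ib V) => -> ->.
- by move=> V; case: (Ib V) => -> ->.
rewrite !ExZ EHV (exprS (1 - q ^+ 3 * (1 - t)) k).
set r := (_ ^+ k); clearbody r; ring.
Qed.
End Indep.

Section More.
Variables (R : realType) (T : finType) (q : R).
Hypothesis q0 : 0 <= q.
Hypothesis q1 : q <= 1.

Lemma qweight_ge0 (A : {set T}) : 0 <= qweight q A.
Proof. by rewrite /qweight mulr_ge0 // exprn_ge0 // subr_ge0. Qed.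

Lemma Ex_le (F G : {set T} -> R) : (forall A, F A <= G A) -> Ex q F <= Ex q G.
Proof.
move=> h; rewrite /Ex; apply: ler_sum => A _; apply: ler_wpM2l => //.
exact: qweight_ge0.
Qed.

Lemma Ex_ge0 (F : {set T} -> R) : (forall A, 0 <= F A) -> 0 <= Ex q F.
Proof. by move=> h; rewrite /Ex; apply: sumr_ge0 => A _; rewrite mulr_ge0 // qweight_ge0. Qed.

Lemma ExB (F G : {set T} -> R) : Ex q (fun A => F A - G A) = Ex q F - Ex q G.
Proof. by rewrite /Ex -sumrB; apply: eq_bigr => A _; rewrite mulrBr. Qed.

Lemma Ex_sum (I : finType) (F : I -> {set T} -> R) :
  Ex q (fun A => \sum_(i : I) F i A) = \sum_(i : I) Ex q (F i).
Proof.
rewrite /Ex; under eq_bigr do rewrite mulr_sumr.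
by rewrite exchange_big.
Qed.

Lemma Ex0 : Ex q (fun _ : {set T} => 0) = 0.
Proof. by rewrite /Ex big1 // => A _; rewrite mulr0. Qed.

End More.

Lemma bern (R : realType) (x : R) (m : nat) : 0 <= x -> x <= 1 ->
  (1 - x) ^+ m * (1 + m%:R * x) <= 1.
Proof.
move=> x0 x1; elim: m => [|m IH]; first by rewrite expr0 mul0r addr0 mulr1.
have p0 : 0 <= (1 - x) ^+ m by rewrite exprn_ge0 // subr_ge0.
rewrite exprSr -mulrA.
apply: le_trans IH; apply: ler_wpM2l => //.
rewrite -natr1; have m0 : (0:R) <= m%:R by rewrite ler0n.
nra.
Qed.

Lemma cube (J : nat) : ((J.+1) ^ 3 <= 8 * 2 ^ J)%N.
Proof.
elim: J => [|J IH] //.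
case: (leqP J 2) => hJ.
  by case: J hJ IH => [|[|[|]]].
rewrite (expnS 2 J).
have : ((J.+2) ^ 3 <= 2 * (J.+1) ^ 3)%N by rewrite !expnS expn0; nia.
move: IH; set A := (J.+2 ^ 3)%N; set B := (J.+1 ^ 3)%N; set P := (2 ^ J)%N.
clearbody A B P; lia.
Qed.

Section Greedy.
Variables (T : finType) (conf : rel T) (d : nat).
Hypothesis hd : forall x, (#|[set y | conf x y || conf y x]| <= d)%N.

Lemma greedy k : forall X : {set T}, (#|X| < k)%N -> exists I : {set T},
  [/\ I \subset X, (forall x y, x \in I -> y \in I -> x != y -> ~~ conf x y)
   & (#|X| <= d.+1 * #|I|)%N].
Proof.
elim: k => [|k IH] X hX //.
case: (set_0Vmem X) => [->|[x xX]].
  by exists set0; rewrite sub0set cards0; split => // x y; rewrite inE.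
set Y := [set y | conf x y || conf y x].
set X' := (X :\ x) :\: Y.
have X'lt : (#|X'| < k)%N.
  have : (#|X'| < #|X|)%N.
    apply: proper_card; apply/properP; split.
      by apply/subsetP => y; rewrite !inE => /andP [_ /andP [_ ->]].
    by exists x => //; rewrite !inE eqxx andbF.
  lia.
case: (IH X' X'lt) => I' [sI' indI' cI'].
have xI' : x \notin I'.
  apply/negP => /(subsetP sI'); by rewrite !inE eqxx andbF.
exists (x |: I'); split.
- apply/subsetP => y; rewrite !inE => /orP [/eqP -> //|/(subsetP sI')].
  by rewrite !inE => /andP [_ /andP [_ ->]].
- move=> y z; rewrite !inE => /orP [/eqP ->|yI] /orP [/eqP ->|zI].
  + by rewrite eqxx.
  + move=> _; move: (subsetP sI' z zI); rewrite !inE => /andP [].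
    by rewrite negb_or => /andP [].
  + move=> _; move: (subsetP sI' y yI); rewrite !inE => /andP [].
    by rewrite negb_or => /andP [].
  + exact: indI'.
- rewrite cardsU1 xI' add1n mulnS.
  have sX : X \subset X' :|: (x |: Y).
    apply/subsetP => y yX; rewrite !inE yX.
    by case: (y == x); case: (conf x y || conf y x).
  have h1 := subset_leq_card sX.
  have h2 := leq_of_leqif (leq_card_setU X' (x |: Y)).
  have h3 : (#|x |: Y| <= 1 + #|Y|)%N by rewrite cardsU1; case: (x \notin Y).
  have h4 := hd x.
  move: cI'; set P := (d.+1 * #|I'|)%N; clearbody P; move: h4; rewrite -/Y => h4; lia.
Qed.
End Greedy.

Section Pair.
Variables (R : realType) (n : nat) (C : finType) (col : vert n -> vert n -> C).
Hypothesis hf : two_factorization col.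

Lemma cardC : #|C| = n.
Proof.
have u0 : (0 < 2 * n + 1)%N by rewrite addn1.
pose u : vert n := Ordinal u0.
have h1 : (\sum_(x in [set~ u]) 1 = 2 * n)%N.
  by rewrite sum1_card cardsC1 card_ord; lia.
rewrite (partition_big (col u) predT) //= in h1.
rewrite (eq_bigr (fun _ => 2%N)) in h1; last first.
  move=> c _; rewrite -[RHS](hf.2 u c) sum1dep_card; apply: eq_card => x.
  by rewrite !inE.
move: h1; rewrite sum_nat_const (_ : #|_| = #|C|); [lia | by apply: eq_card].
Qed.

Variables (u v : vert n).

Definition Af (c : C) : vert n := odflt u [pick x | (x != u) && (col u x == c)].
Definition Bf (c : C) : vert n :=
  odflt v [pick x | [&& x != v, col v x == c & x != Af c]].

Lemma A_spec c : Af c != u /\ col u (Af c) = c.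
Proof.
rewrite /Af; case: pickP => [x /andP [h1 /eqP h2] | h] //=.
exfalso; move: (hf.2 u c).
rewrite (_ : [set _ | _] = set0) ?cards0 //.
by apply/setP => y; rewrite !inE h.
Qed.

Lemma B_spec c : [/\ Bf c != v, col v (Bf c) = c & Bf c != Af c].
Proof.
rewrite /Bf; case: pickP => [x /and3P [h1 /eqP h2 h3] | h] //=.
exfalso; move: (hf.2 v c) => h2.
have : ([set y | (y != v) && (col v y == c)] \subset [set Af c]).
  apply/subsetP => y; rewrite !inE => /andP [y1 y2].
  by move: (h y); rewrite y1 y2 /= => /negbFE.
move/subset_leq_card; rewrite h2 cards1 //.
Qed.

Lemma A_inj c c' : Af c = Af c' -> c = c'.
Proof. by move=> h; case: (A_spec c) => _ <-; case: (A_spec c') => _ <-; rewrite h. Qed.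

Lemma B_inj c c' : Bf c = Bf c' -> c = c'.
Proof. by move=> h; case: (B_spec c) => _ <- _; case: (B_spec c') => _ <- _; rewrite h. Qed.

Lemma pair_exists : exists I : {set C},
  [/\ good_pairs Af Bf I, (n <= 3 * #|I|)%N &
   forall (V : {set vert n}) (D : {set C}),
     (#|[set c in I | (c \in D) && (Af c \in V) && (Bf c \in V)]| <=
      #|[set c in D | has_col_nbr col V u c && has_col_nbr col V v c]|)%N].
Proof.
pose conf := fun c c' => Af c == Bf c'.
have hd : forall x, (#|[set y | conf x y || conf y x]| <= 2)%N.
  move=> x.
  have s : [set y | conf x y || conf y x] \subset [set y | Bf y == Af x] :|: [set y | Af y == Bf x].
    by apply/subsetP => y; rewrite !inE /conf eq_sym.
  apply: (leq_trans (subset_leq_card s)); apply: (leq_trans (leq_of_leqif (leq_card_setU _ _))).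
  have c1 : (#|[set y | Bf y == Af x]| <= 1)%N.
    by apply/card_le1_eqP => y1 y2; rewrite !inE => /eqP h1 /eqP h2; apply: B_inj; rewrite h1 h2.
  have c2 : (#|[set y | Af y == Bf x]| <= 1)%N.
    by apply/card_le1_eqP => y1 y2; rewrite !inE => /eqP h1 /eqP h2; apply: A_inj; rewrite h1 h2.
  lia.
have [I [_ indI cI]] := greedy hd (k := #|[set: C]|.+1) (X := [set: C]) (ltnSn _).
exists I; split.
- move=> c cI1; split; first by case: (B_spec c) => _ _; rewrite eq_sym.
  move=> c' c'I cc'; split.
  + by apply/negP => /eqP /A_inj /eqP; rewrite eq_sym (negbTE cc').
  + by apply/negP => /eqP /B_inj /eqP; rewrite eq_sym (negbTE cc').
  + by apply: indI => //; rewrite eq_sym.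
- by move: cI; rewrite cardsT cardC.
- move=> V D; apply: subset_leq_card; apply/subsetP => c; rewrite !inE.
  move=> /andP [cI1 /andP [/andP [cD aV] bV]]; rewrite cD /=.
  apply/andP; split; apply/existsP.
  + by exists (Af c); case: (A_spec c) => h1 h2; rewrite aV h1 h2 eqxx.
  + by exists (Bf c); case: (B_spec c) => h1 h2 _; rewrite bV h1 h2 eqxx.
Qed.
End Pair.

Lemma nat_key (n M E J : nat) : (0 < M)%N -> J = (n %/ M)%N ->
  (M * (32 * E * M ^ 2) <= n)%N -> ((2 * n + 1) * (2 * n + 1) * E <= 2 ^ J)%N.
Proof.
move=> M0 hJ hn.
have h1 : (n < J.+1 * M)%N by rewrite hJ ltn_ceil.
have h2 : (32 * E * M ^ 2 <= J)%N.
  by rewrite hJ -(mulKn (32 * E * M ^ 2) M0) leq_div2r.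
have h3 := cube J.
have s1 : ((2 * n + 1) * (2 * n + 1) <= (2 * M * J.+1) * (2 * M * J.+1))%N.
  apply: leq_mul; lia.
have s2 : (8 * (4 * M ^ 2 * E * J.+1 ^ 2) <= J.+1 * J.+1 ^ 2)%N.
  rewrite mulnA (_ : 8 * (4 * M ^ 2 * E) = 32 * E * M ^ 2)%N; last by lia.
  apply: leq_mul => //; lia.
have e1 : ((2 * M * J.+1) * (2 * M * J.+1) * E = 4 * M ^ 2 * E * J.+1 ^ 2)%N.
  rewrite !expnS !expn0; lia.
have e2 : (J.+1 * J.+1 ^ 2 = J.+1 ^ 3)%N by rewrite !expnS expn0; lia.
have s3 : ((2 * n + 1) * (2 * n + 1) * E <= (2 * M * J.+1) * (2 * M * J.+1) * E)%N.
  by apply: leq_mul.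
move: s1 s2 s3 e1 e2 h3.
set a := ((2 * n + 1) * (2 * n + 1))%N; set b := ((2 * M * J.+1) * (2 * M * J.+1))%N.
set c := (4 * M ^ 2 * E * J.+1 ^ 2)%N; set d := (J.+1 * J.+1 ^ 2)%N.
set e := (J.+1 ^ 3)%N; set P := (2 ^ J)%N.
move=> s1 s2 s3 e1 e2 h3.
lia.
Qed.

Definition bad (R : realType) (n : nat) (C : finType) (col : vert n -> vert n -> C)
  (eta : R) (u v : vert n) (V : {set vert n}) (D : {set C}) : R :=
  ((u != v) && ~~ (eta * n%:R <=
     (#|[set c in D | has_col_nbr col V u c && has_col_nbr col V v c]|)%:R))%:R.

Lemma pair_bound (R : realType) (mu eta : R) (m n J : nat) (C : finType)
  (col : vert n -> vert n -> C) (hf : two_factorization col) (u v : vert n) :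
  0 < mu -> mu <= 1 -> (0 < m)%N ->
  4 * (1 - mu ^+ 3 * (1 - 2^-1)) ^+ m <= 1 ->
  eta <= ((3 * m)%N%:R)^-1 -> J = (n %/ (3 * m))%N ->
  Ex mu (fun V => Ex mu (fun D => bad col eta u v V D)) <= (2^-1) ^+ J.
Proof.
move=> mu0 mu1 m0 hr heta hJ.
set t : R := 2^-1.
have t0 : 0 <= t by rewrite /t invr_ge0.
have t1 : t <= 1 by rewrite /t invf_le1 // ler1n.
have tJ0 : 0 <= t ^+ J by rewrite exprn_ge0.
have mu0' : 0 <= mu by apply: ltW.
case: (eqVneq u v) => [->|huv].
  rewrite (@Ex_ext _ _ mu _ (fun _ => 0)) ?Ex0 // => V.
  by rewrite (@Ex_ext _ _ mu _ (fun _ => 0)) ?Ex0 // => D; rewrite /bad eqxx.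
have [I [gp cI hc]] := pair_exists hf u v.
set a := Af col u; set b := Bf col u v.
have Gt : forall V D, G t a b I V D =
   t ^+ #|[set c in I | (c \in D) && (a c \in V) && (b c \in V)]|.
  move=> V D; rewrite /G (bigID (fun c => (c \in D) && (a c \in V) && (b c \in V))) /=.
  rewrite [X in _ * X]big1; last by move=> c /andP [_ /negbTE ->].
  rewrite mulr1 -prodr_const; apply: eq_big => [c|c /andP [_ ->] //].
  by rewrite !inE.
have M0 : (0 < 3 * m)%N by rewrite muln_gt0.
have pw : forall V D, bad col eta u v V D <= 2 ^+ J * G t a b I V D.
  move=> V D; rewrite Gt /bad.
  case hb : ((u != v) && _); last by rewrite mulr_ge0 // exprn_ge0.
  move: hb; rewrite huv /= -ltNge => hlt.
  set Z := #|[set c in I | _]|.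
  have hZ := hc V D; rewrite -/a -/b -/Z in hZ.
  have h1 : (n < J.+1 * (3 * m))%N by rewrite hJ ltn_ceil.
  have h2 : eta * n%:R <= n%:R / (3 * m)%N%:R.
    rewrite mulrC; apply: ler_wpM2l => //.
  have h3 : n%:R / (3 * m)%N%:R < J.+1%:R :> R.
    by rewrite ltr_pdivrMr ?ltr0n // -natrM ltr_nat.
  have hZJ : (Z <= J)%N.
    rewrite -ltnS -(ltr_nat R); apply: le_lt_trans h3; apply: le_trans h2.
    apply: le_trans (ltW hlt); by rewrite ler_nat.
  apply: le_trans (_ : 2 ^+ J * t ^+ J <= _).
    by rewrite -exprMn /t divff ?expr1n // pnatr_eq0.
  apply: ler_wpM2l; first by rewrite exprn_ge0.
  exact: ler_wiXn2l.
apply: le_trans (_ : Ex mu (fun V => Ex mu (fun D => 2 ^+ J * G t a b I V D)) <= _).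
  apply: Ex_le => // V; apply: Ex_le => // D; exact: pw.
rewrite (@Ex_ext _ _ mu _ (fun V => 2 ^+ J * Ex mu (fun D => G t a b I V D))); last first.
  by move=> V; rewrite ExZ.
rewrite ExZ (indep mu t (erefl _) gp).
set r := 1 - mu ^+ 3 * (1 - t).
have mu3 : mu ^+ 3 <= 1 by rewrite exprn_ile1.
have mu30 : 0 <= mu ^+ 3 by rewrite exprn_ge0.
have th : 1 - t = t by rewrite /t; field.
have r0 : 0 <= r.
  rewrite /r th subr_ge0 -[1 in X in _ <= X]mul1r; exact: ler_pM.
have r1 : r <= 1 by rewrite /r th lerBlDr lerDl mulr_ge0.
have hIJ : (m * J <= #|I|)%N.
  have := leq_divM n (3 * m); rewrite -hJ => h.
  have e : (J * (3 * m) = 3 * (m * J))%N by rewrite mulnC -mulnA.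
  move: h cI; rewrite e; set X := (m * J)%N; set Y := #|I|; clearbody X Y.
  clear; lia.
have rm0 : 0 <= r ^+ m by rewrite exprn_ge0.
have rm : r ^+ m <= 4^-1.
  have h4 : (0:R) < 4 by rewrite ltr0n.
  rewrite -(ler_pM2l h4) mulfV //; last by rewrite pnatr_eq0.
apply: le_trans (_ : 2 ^+ J * (4^-1) ^+ J <= _).
  apply: ler_wpM2l; first by rewrite exprn_ge0.
  apply: le_trans (ler_wiXn2l r0 r1 hIJ) _; rewrite exprM.
  by apply: lerXn2r => //; rewrite nnegrE // invr_ge0.
rewrite -exprMn (_ : 2 * 4^-1 = t) //.
by rewrite /t; field.
Qed.

Unset Implicit Arguments.
Theorem lemma3p16 (R : realType) :
  forall mu : R, 0 < mu -> mu <= 1 ->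
  exists eta0 : R, 0 < eta0 /\
  forall eta : R, 0 < eta -> eta <= eta0 ->
  forall eps : R, 0 < eps ->
  exists N : nat, forall n : nat, (N <= n)%N ->
  forall (C : finType) (col : vert n -> vert n -> C),
    two_factorization col ->
    1 - eps <= prob_good col mu eta.
Proof.
move=> mu mu0 mu1.
set t : R := 2^-1.
have th : 1 - t = t by rewrite /t; field.
have t0 : 0 < t by rewrite /t invr_gt0 ltr0n.
have t1 : t <= 1 by rewrite /t invf_le1 // ler1n.
set xx := mu ^+ 3 * (1 - t).
have mu30 : 0 < mu ^+ 3 by rewrite exprn_gt0.
have mu31 : mu ^+ 3 <= 1 by rewrite exprn_ile1 // ltW.
have xx0 : 0 < xx by rewrite /xx th mulr_gt0.
have xx1 : xx <= 1.
  by rewrite /xx th -[1]mul1r; apply: ler_pM => //; [apply: ltW | apply: ltW].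
set m := Num.bound (3 / xx).
have hm : 3 / xx < m%:R by apply: archi_boundP; rewrite divr_ge0 // ltW.
have hm' : 3 < m%:R * xx by rewrite -ltr_pdivrMr.
have m0 : (0 < m)%N.
  rewrite lt0n; apply/negP => /eqP e; move: hm'; rewrite e mul0r; lra.
have hr : 4 * (1 - xx) ^+ m <= 1.
  have := bern m (ltW xx0) xx1.
  have : 0 <= (1 - xx) ^+ m by rewrite exprn_ge0 // subr_ge0.
  move: hm'.
  set P := (1 - xx) ^+ m; set Q := m%:R * xx; clearbody P Q => hQ P0 hb.
  have : 0 <= P * (Q - 3) by apply: mulr_ge0 => //; rewrite subr_ge0; apply: ltW.
  move: hb; clear; move=> hb h; nra.
have M0 : (0 < 3 * m)%N by rewrite muln_gt0.
exists ((3 * m)%N%:R)^-1; split; first by rewrite invr_gt0 ltr0n.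
move=> eta eta0 etale eps eps0.
set E := Num.bound (eps^-1).
have hE : eps^-1 < E%:R by apply: archi_boundP; rewrite invr_ge0 ltW.
exists ((3 * m) * (32 * E * (3 * m) ^ 2))%N => n hn C col hf.
set J := (n %/ (3 * m))%N.
have key := nat_key M0 (erefl J) hn.
have PG : prob_good col mu eta =
    Ex mu (fun V => Ex mu (fun D => (good_event col eta V D)%:R)).
  rewrite /prob_good /Ex; apply: eq_bigr => V _; rewrite mulr_sumr.
  by apply: eq_bigr => D _; rewrite mulrA.
have mu0' : 0 <= mu by apply: ltW.
have pw : forall V D, 1 - (good_event col eta V D)%:R <=
    \sum_(u : vert n) \sum_(v : vert n) bad col eta u v V D.
  move=> V D; case g: (good_event col eta V D).
    rewrite subrr; apply: sumr_ge0 => u _; apply: sumr_ge0 => v _.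
    by rewrite /bad ler0n.
  move/negbT: g; rewrite /good_event => /forallPn [u] /forallPn [v].
  rewrite negb_imply => huv.
  rewrite subr0 (bigD1 u) //= (bigD1 v) //= /bad huv.
  rewrite -addrA lerDl; apply: addr_ge0.
    by apply: sumr_ge0 => w _; rewrite ler0n.
  by apply: sumr_ge0 => w _; apply: sumr_ge0 => z _; rewrite ler0n.
have H1 : 1 - prob_good col mu eta <=
    \sum_(u : vert n) \sum_(v : vert n) Ex mu (fun V => Ex mu (fun D => bad col eta u v V D)).
  rewrite PG -[X in X - _](@Ex1 R (vert n : finType) mu) -ExB.
  rewrite (@Ex_ext _ _ mu _ (fun V => Ex mu (fun D => 1 - (good_event col eta V D)%:R))); last first.
    by move=> V; rewrite ExB Ex1.
  apply: le_trans (_ : Ex mu (fun V => Ex mu (fun D =>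
      \sum_(u : vert n) \sum_(v : vert n) bad col eta u v V D)) <= _).
    by apply: Ex_le => // V; apply: Ex_le => // D; apply: pw.
  rewrite (@Ex_ext _ _ mu _ (fun V => \sum_(u : vert n) \sum_(v : vert n)
      Ex mu (fun D => bad col eta u v V D))); last first.
    move=> V; rewrite Ex_sum; apply: eq_bigr => u _; by rewrite Ex_sum.
  rewrite Ex_sum; apply: ler_sum => u _; rewrite Ex_sum //.
have H2 : \sum_(u : vert n) \sum_(v : vert n) Ex mu (fun V => Ex mu (fun D => bad col eta u v V D))
    <= \sum_(u : vert n) \sum_(v : vert n) t ^+ J.
  apply: ler_sum => u _; apply: ler_sum => v _.
  by apply: (@pair_bound R mu eta m n J C col hf u v).
rewrite !sumr_const (_ : #|_| = (2 * n + 1)%N) in H2; last by apply: card_ord.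
rewrite -mulrnA -mulr_natl in H2.
have H3 := le_trans H1 H2.
have k1 : ((2 * n + 1) * (2 * n + 1))%N%:R * E%:R <= (2%:R ^+ J : R).
  by rewrite -natrM -natrX ler_nat.
have k2 : t ^+ J * 2%:R ^+ J = 1.
  by rewrite -exprMn /t (_ : 2^-1 * 2 = 1 :> R) ?expr1n //; field.
have k3 : 1 < eps * E%:R.
  by rewrite -(ltr_pM2l eps0) mulfV ?gt_eqF in hE.
have k4 : 0 <= t ^+ J by rewrite exprn_ge0 // ltW.
have k5 : (0 : R) <= ((2 * n + 1) * (2 * n + 1))%N%:R by rewrite ler0n.
move: H3 k1 k2 k3 k4 k5.
set K := (((2 * n + 1) * (2 * n + 1))%N%:R : R); set P := t ^+ J; set Q := (2%:R ^+ J : R).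
set EE := (E%:R : R); set pg := prob_good col mu eta.
clearbody K P Q EE pg => H3 k1 k2 k3 k4 k5.
have k6 : K * P <= K * P * (eps * EE).
  rewrite -[X in X <= _]mulr1; apply: ler_wpM2l; [exact: mulr_ge0 | exact: ltW].
have k7 : K * P * (eps * EE) = eps * P * (K * EE) by ring.
have k8 : eps * P * (K * EE) <= eps * P * Q.
  by apply: ler_wpM2l => //; apply: mulr_ge0 => //; apply: ltW.
have k9 : eps * P * Q = eps by rewrite -mulrA k2 mulr1.
lra.
Qed.
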